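(* There exists a polynomial-time computable function $f$ that maps every IPDL-formula to a variable-free IPDL-formula such that, for every IPDL-formula $\varphi$, $\varphi\in\mathbf{IPDL}$ if, and only if, $f(\varphi)\in\mathbf{IPDL}$ (i.e., $\mathbf{IPDL}$ embeds into its variable-free fragment in polynomial time).
   Context: Fix a countable set $\mathit{Var}=\{p_1,p_2,\ldots\}$ of propositional variables and a countable set $AP=\{a_1,a_2,\ldots\}$ of atomic program terms. IPDL formulas and program terms are defined simultaneously by $\varphi ::= p \mid \bot \mid (\varphi\rightarrow\varphi)\mid [\alpha]\varphi$ and $\alpha ::= a \mid \varphi? \mid (\alpha;\alpha)\mid(\alpha\cup\alpha)\mid(\alpha\cap\alpha)\mid \alpha^*$ ($p\in\mathit{Var}$, $a\in AP$). A Kripke model is $\mathfrak{M}=(S,\{R_a\}_{a\in AP},V)$, $S\neq\varnothing$, $R_a\subseteq S\times S$, $V:\mathit{Var}\to2^S$; $(s,t)\in R_{\psi?}$ iff $s=t$ and $\mathfrak{M},s\models\psi$; $R_{\alpha;\beta}$ is relational composition; $R_{\alpha\cup\beta}=R_\alpha\cup R_\beta$; $R_{\alpha\cap\beta}=R_\alpha\cap R_\beta$; $R_{\alpha^*}$ is the reflexive transitive closure of $R_\alpha$; $\mathfrak{M},s\models p$ iff $s\in V(p)$; $\bot$ is never true; $\rightarrow$ is classical; $\mathfrak{M},s\models[\alpha]\psi$ iff $\psi$ holds at all $R_\alpha$-successors of $s$. A formula is valid if it is true at every state of every model; $\mathbf{IPDL}$ is the set of valid IPDL-formulas. A formula is variable-free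 if it contains no propositional variables; the variable-free fragment of $\mathbf{IPDL}$ is the set of variable-free formulas in $\mathbf{IPDL}$. *)

(* Defs.v *)
From Stdlib Require Import Arith NArith List Relations.
Import ListNotations.

Inductive form : Type :=
| var  : nat -> form
| bot  : form
| imp  : form -> form -> form
| box  : prog -> form -> form
with prog : Type :=
| atom  : nat -> prog
| test  : form -> prog
| pseq  : prog -> prog -> prog
| punion : prog -> prog -> prog
| pcap  : prog -> prog -> prog
| pstar : prog -> prog.

Record model : Type := Model {
  St : Type;
  St_inhabited : inhabited St;
  Rel : nat -> St -> St -> Prop;
  Val : nat -> St -> Prop }.

Fixpoint sat (M : model) (phi : form) (s : St M) {struct phi} : Prop :=
  match phi with
  | var p => Val M p s
  | bot => False
  | imp a b => sat M a s -> sat M b s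
  | box al b => forall t, rel M al s t -> sat M b t
  end
with rel (M : model) (al : prog) (s t : St M) {struct al} : Prop :=
  match al with
  | atom a => Rel M a s t
  | test psi => s = t /\ sat M psi s
  | pseq a b => exists u, rel M a s u /\ rel M b u t
  | punion a b => rel M a s t \/ rel M b s t
  | pcap a b => rel M a s t /\ rel M b s t
  | pstar a => clos_refl_trans (St M) (rel M a) s t
  end.

Definition valid (phi : form) : Prop := forall (M : model) (s : St M), sat M phi s.

Definition IPDL : form -> Prop := valid.

Fixpoint var_free (phi : form) : Prop :=
  match phi with
  | var _ => False
  | bot => True
  | imp a b => var_free a /\ var_free b
  | box al b => var_free_prog al /\ var_free b
  end
with var_free_prog (al : prog) : Prop :=
  match al with
  | atom _ => True
  | test psi => var_free psi
  | pseq a b | punion a b | pcap a b => var_free_prog a /\ var_free_prog b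
  | pstar a => var_free_prog a
  end.

(* Symbols (nat, 0 = blank):
   1 var, 2 bot, 3 imp, 4 box, 5 atom, 6 test, 7 seq, 8 union, 9 cap,
   10 star, 11 bit 0, 12 bit 1, 13 end-of-number.  Polish prefix notation,
   indices written in binary (least significant bit first). *)
Fixpoint bin_pos (p : positive) : list nat :=
  match p with
  | xH => [12]
  | xO q => 11 :: bin_pos q
  | xI q => 12 :: bin_pos q
  end.

Definition enc_nat (n : nat) : list nat :=
  match N.of_nat n with
  | N0 => [13]
  | Npos p => bin_pos p ++ [13]
  end.

Fixpoint enc_form (phi : form) : list nat :=
  match phi with
  | var p => 1 :: enc_nat p
  | bot => [2]
  | imp a b => 3 :: enc_form a ++ enc_form b
  | box al b => 4 :: enc_prog al ++ enc_form b
  end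
with enc_prog (al : prog) : list nat :=
  match al with
  | atom a => 5 :: enc_nat a
  | test psi => 6 :: enc_form psi
  | pseq a b => 7 :: enc_prog a ++ enc_prog b
  | punion a b => 8 :: enc_prog a ++ enc_prog b
  | pcap a b => 9 :: enc_prog a ++ enc_prog b
  | pstar a => 10 :: enc_prog a
  end.

Inductive dir : Type := Lft | Rgt | Stay.

Record TM : Type := mkTM {
  nstates : nat;             (* states 0 .. nstates-1, start state 0 *)
  nsyms : nat;               (* tape symbols 0 .. nsyms-1, 0 = blank *)
  delta : nat -> nat -> option (nat * nat * dir) (* None = halt *) }.

Definition TM_wf (M : TM) : Prop :=
  14 <= nsyms M /\ 0 < nstates M /\
  (forall q a, (nstates M <= q \/ nsyms M <= a) -> delta M q a = None) /\
  (forall q a q' b d, delta M q a = Some (q', b, d) -> q' < nstates M /\ b < nsyms M).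

(* configuration: state, cells left of head (nearest first), head cell,
   cells right of head (nearest first) *)
Record config : Type := Cfg { cstate : nat; cleft : list nat; chead : nat; cright : list nat }.

Definition step (M : TM) (c : config) : option config :=
  match delta M (cstate c) (chead c) with
  | None => None
  | Some (q', b, d) =>
      Some match d with
      | Stay => Cfg q' (cleft c) b (cright c)
      | Lft => match cleft c with
               | [] => Cfg q' [] 0 (b :: cright c)
               | x :: l => Cfg q' l x (b :: cright c)
               end
      | Rgt => match cright c with
               | [] => Cfg q' (b :: cleft c) 0 []
               | x :: r => Cfg q' (b :: cleft c) x r
               end
      end
  end.

Definition init (w : list nat) : config :=
  match w with
  | [] => Cfg 0 [] 0 []
  | x :: r => Cfg 0 [] x r
  end.

Fixpoint run (M : TM) (n : nat) (c : config) : option config :=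
  match n with
  | 0 => Some c
  | S k => match step M c with None => None | Some c' => run M k c' end
  end.

Fixpoint take_nonblank (l : list nat) : list nat :=
  match l with
  | [] => []
  | 0 :: _ => []
  | x :: r => x :: take_nonblank r
  end.

Definition output (c : config) : list nat := take_nonblank (chead c :: cright c).

Definition halts_with (M : TM) (w : list nat) (t : nat) (u : list nat) : Prop :=
  exists n c, n <= t /\ run M n (init w) = Some c /\ step M c = None /\ output c = u.

Definition polytime_form_fun (f : form -> form) : Prop :=
  exists (M : TM) (k d : nat), TM_wf M /\
    forall phi : form,
      halts_with M (enc_form phi) (d * length (enc_form phi) ^ k + d) (enc_form (f phi)).

(* Main.v *)
Require Import Defs.
From Stdlib Require Import Arith NArith List Relations Lia Classical.
Import ListNotations.

Definition top := imp bot bot.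
Definition trv (i : nat) : form := box (pcap (atom (4*i+2)) (test top)) bot.
Fixpoint tr (phi : form) : form := match phi with
 | var i => trv i | bot => bot | imp a b => imp (tr a) (tr b) | box al b => box (trp al) (tr b) end
with trp (al : prog) : prog := match al with
 | atom a => atom (2*a+1) | test psi => test (tr psi) | pseq a b => pseq (trp a) (trp b)
 | punion a b => punion (trp a) (trp b) | pcap a b => pcap (trp a) (trp b) | pstar a => pstar (trp a) end.

Scheme form_mind := Induction for form Sort Prop with prog_mind := Induction for prog Sort Prop.
Combined Scheme fp_mind from form_mind, prog_mind.

Lemma tr_vf : (forall phi, var_free (tr phi)) /\ (forall al, var_free_prog (trp al)).
Proof. apply fp_mind; simpl; intuition. Qed.

Lemma crt_iff {A} (r1 r2 : relation A) : (forall s t, r1 s t <-> r2 s t) ->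
  forall s t, clos_refl_trans A r1 s t -> clos_refl_trans A r2 s t.
Proof. intros H s t Hc; induction Hc; [apply rt_step; apply H; auto | apply rt_refl | eapply rt_trans; eauto]. Qed.

Lemma sem (N : model) (R : nat -> St N -> St N -> Prop) (V : nat -> St N -> Prop)
 (HR : forall a s t, R a s t <-> Rel N (2*a+1) s t) (HV : forall i s, V i s <-> sat N (trv i) s) :
 (forall phi s, sat (Model (St N) (St_inhabited N) R V) phi s <-> sat N (tr phi) s) /\
 (forall al s t, rel (Model (St N) (St_inhabited N) R V) al s t <-> rel N (trp al) s t).
Proof.
  apply fp_mind; intros; simpl.
  - apply HV.
  - tauto.
  - specialize (H s); specialize (H0 s); tauto.
  - split; intros Hx t Ht; apply H0; apply Hx; apply H; exact Ht.
  - apply HR.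
  - specialize (H s); tauto.
  - split; intros [u [H1 H2]]; exists u; split; (apply H || apply H0); assumption.
  - specialize (H s t); specialize (H0 s t); tauto.
  - specialize (H s t); specialize (H0 s t); tauto.
  - split; apply crt_iff; intros; rewrite H; reflexivity.
Qed.

Lemma tr_valid phi : valid phi <-> valid (tr phi).
Proof.
  split.
  - intros Hv N s.
    destruct (sem N (fun a => Rel N (2*a+1)) (fun i => sat N (trv i))
      (fun _ _ _ => iff_refl _) (fun _ _ => iff_refl _)) as [H _].
    apply H. apply Hv.
  - intros Hv M s. destruct M as [S inh Rl Vl].
    set (R' := fun n (s t : S) => (exists a, n = 2*a+1 /\ Rl a s t) \/ (exists i, n = 4*i+2 /\ s = t /\ ~ Vl i s)).
    set (N := Model S inh R' (fun _ _ => False)).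
    destruct (sem N Rl Vl) as [H _].
    + intros a s0 t0; simpl; unfold R'; split.
      * intros; left; exists a; split; [reflexivity | assumption].
      * intros [[a' [E H1]] | [i [E _]]]; [ replace a with a' by lia; auto | lia].
    + intros i s0; simpl; unfold R'; split.
      * intros Hv0 t [[[a [E _]] | [i' [E [Est Hn]]]] _]; [lia|].
        replace i' with i in Hn by lia. apply Hn; exact Hv0.
      * intros Hs. apply NNPP. intros Hn. apply (Hs s0).
        split; [right; exists i; auto | split; auto].
    + apply (proj2 (H phi s)). apply Hv.
Qed.

Lemma enc_nat_odd a : enc_nat (2*a+1) = 12 :: enc_nat a.
Proof. unfold enc_nat. rewrite Nat2N.inj_add, Nat2N.inj_mul. destruct (N.of_nat a); reflexivity. Qed.
Lemma enc_nat_42 a : enc_nat (4*a+2) = 11 :: 12 :: enc_nat a.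
Proof. unfold enc_nat. rewrite Nat2N.inj_add, Nat2N.inj_mul. destruct (N.of_nat a); reflexivity. Qed.

Definition dig (d : nat) := d = 11 \/ d = 12.
Lemma bin_dig p : Forall dig (bin_pos p).
Proof. induction p; simpl; constructor; auto; unfold dig; auto. Qed.
Lemma enc_shape i : exists ds, enc_nat i = ds ++ [13] /\ Forall dig ds.
Proof. unfold enc_nat. destruct (N.of_nat i). exists []; auto. exists (bin_pos p); split; auto using bin_dig. Qed.

Definition out (m : bool) (x : nat) : list nat :=
  match m with
  | false => match x with 1 => [4;9;5;11;12] | 5 => [5;12] | _ => [x] end
  | true => match x with 13 => [13;6;3;2;2;2] | _ => [x] end
  end.
Definition newmode (m : bool) (x : nat) : bool :=
  match m with
  | false => match x with 1 => true | _ => false end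
  | true => match x with 13 => false | _ => true end
  end.
Fixpoint trans (m : bool) (w : list nat) : list nat :=
  match w with [] => [] | x :: r => out m x ++ trans (newmode m x) r end.

Lemma trans_dig m ds r : Forall dig ds -> trans m (ds ++ r) = ds ++ trans m r.
Proof. induction 1 as [|d ds Hd _ IH]; auto. destruct Hd; subst; destruct m; simpl; rewrite IH; auto. Qed.

Lemma enc_trans : (forall phi r, trans false (enc_form phi ++ r) = enc_form (tr phi) ++ trans false r) /\
  (forall al r, trans false (enc_prog al ++ r) = enc_prog (trp al) ++ trans false r).
Proof.
  apply fp_mind; intros; cbn [enc_form enc_prog tr trp trv top].
  - rewrite enc_nat_42. simpl. destruct (enc_shape n) as [ds [E F]]. rewrite E.
    rewrite <- app_assoc. simpl. rewrite trans_dig by auto. simpl.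
    repeat (rewrite <- app_assoc; simpl). reflexivity.
  - reflexivity.
  - simpl; repeat rewrite <- app_assoc; rewrite H, H0; reflexivity.
  - simpl; repeat rewrite <- app_assoc; rewrite H, H0; reflexivity.
  - rewrite enc_nat_odd. simpl. destruct (enc_shape n) as [ds [E F]]. rewrite E.
    rewrite <- app_assoc. simpl. rewrite trans_dig by auto. simpl.
    repeat (rewrite <- app_assoc; simpl). reflexivity.
  - simpl; rewrite H; reflexivity.
  - simpl; repeat rewrite <- app_assoc; rewrite H, H0; reflexivity.
  - simpl; repeat rewrite <- app_assoc; rewrite H, H0; reflexivity.
  - simpl; repeat rewrite <- app_assoc; rewrite H, H0; reflexivity.
  - simpl; rewrite H; reflexivity.
Qed.

Definition sym (a : nat) := 1 <= a <= 13.
Lemma enc_sym : (forall phi, Forall sym (enc_form phi)) /\ (forall al, Forall sym (enc_prog al)).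
Proof.
  assert (Hn : forall n, Forall sym (enc_nat n)).
  { intro n. destruct (enc_shape n) as [ds [E F]]. rewrite E. apply Forall_app; split.
    - eapply Forall_impl; [|exact F]. intros a [->| ->]; unfold sym; lia.
    - constructor; [unfold sym; lia | constructor]. }
  apply fp_mind; intros; simpl; repeat constructor; try (unfold sym; lia); try apply Forall_app; auto.
Qed.

Open Scope bool_scope.

Definition Bst (m : bool) := if m then 2 else 1.
Definition Sst (m : bool) := if m then 4 else 3.
Definition code (m : bool) x k := (if m then 84 else 0) + 6 * x + k.
Definition Rst m x k := 6 + code m x k.
Definition decode (r : nat) : bool * nat * nat := (84 <=? r, (r mod 84) / 6, r mod 6).

Definition Rbranch (r a : nat) : option (nat * nat * dir) :=
  let '(m, x, k) := decode r in
  if a =? 0 then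
    let p := out m x in
    if k + 1 <? length p then Some (Rst m x (k+1), nth k p 0, Rgt)
    else Some (Bst (newmode m x), nth k p 0, Lft)
  else Some (6 + r, a, Rgt).

Definition Sbranch (m : bool) (a : nat) : option (nat * nat * dir) :=
  if a =? 14 then Some (5, a, Rgt)
  else if (1 <=? a) && (a <=? 13) then Some (Rst m a 0, 15, Rgt) else None.

Definition delta0 (q a : nat) : option (nat * nat * dir) :=
  match q with
  | 0 => if a =? 0 then Some (1, 14, Lft) else Some (0, a, Rgt)
  | 1 => if (a =? 0) || (a =? 15) then Some (3, a, Rgt) else Some (1, a, Lft)
  | 2 => if (a =? 0) || (a =? 15) then Some (4, a, Rgt) else Some (2, a, Lft)
  | 3 => Sbranch false a
  | 4 => Sbranch true a
  | 5 => None
  | S (S (S (S (S (S r))))) => Rbranch r a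
  end.

Definition dlt (q a : nat) := if (q <? 174) && (a <? 16) then delta0 q a else None.
Definition TMf := mkTM 174 16 dlt.

Definition okb := forallb (fun q => forallb (fun a => match dlt q a with None => true
   | Some (q', b, _) => (q' <? 174) && (b <? 16) end) (seq 0 16)) (seq 0 174).
Lemma okb_true : okb = true. Proof. vm_compute. reflexivity. Qed.

Lemma TMf_wf : TM_wf TMf.
Proof.
  unfold TM_wf; simpl. split; [lia|]. split; [lia|]. split.
  - intros q a H. unfold dlt. destruct H as [H|H].
    + replace (q <? 174) with false by (symmetry; apply Nat.ltb_ge; lia). reflexivity.
    + replace (a <? 16) with false by (symmetry; apply Nat.ltb_ge; lia). destruct (q <? 174); reflexivity.
  - intros q a q' b d H.
    assert (Hq : q < 174 /\ a < 16).
    { unfold dlt in H. destruct (q <? 174) eqn:E1; destruct (a <? 16) eqn:E2; simpl in H; try discriminate.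
      apply Nat.ltb_lt in E1, E2; auto. }
    pose proof okb_true as Hk. unfold okb in Hk. rewrite forallb_forall in Hk.
    specialize (Hk q ltac:(apply in_seq; lia)). rewrite forallb_forall in Hk.
    specialize (Hk a ltac:(apply in_seq; lia)). rewrite H in Hk.
    apply andb_prop in Hk as [H1 H2]. apply Nat.ltb_lt in H1, H2; auto.
Qed.

Lemma decode_code m x k : x < 14 -> k < 6 -> decode (code m x k) = (m, x, k).
Proof.
  intros Hx Hk. destruct m;
  do 14 (destruct x as [|x]; [do 6 (destruct k as [|k]; [reflexivity|]); lia|]); lia.
Qed.

Definition hd0 (t : list nat) := match t with [] => 0 | x :: _ => x end.
Definition at_ q L (t : list nat) := match t with [] => Cfg q L 0 [] | x :: r => Cfg q L x r end.
Definition moveL q (L t : list nat) := match L with [] => Cfg q [] 0 t | x :: L' => at_ q L' (x :: t) end.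

Section Gen.
Variable M : TM.

Lemma step_R q L t q' b : delta M q (hd0 t) = Some (q', b, Rgt) ->
  step M (at_ q L t) = Some (at_ q' (b :: L) (tl t)).
Proof. intros H. destruct t as [|x [|y r]]; unfold step; simpl in *; rewrite H; reflexivity. Qed.

Lemma step_L q L t q' b : delta M q (hd0 t) = Some (q', b, Lft) ->
  step M (at_ q L t) = Some (moveL q' L (b :: tl t)).
Proof. intros H. destruct L; destruct t as [|x r]; unfold step; simpl in *; rewrite H; reflexivity. Qed.

Lemma run_add a b c c' : run M a c = Some c' -> run M (a + b) c = run M b c'.
Proof.
  revert c; induction a; intros c H; simpl in *. inversion H; auto.
  destruct (step M c); [|discriminate]. auto.
Qed.

Lemma run_1 c c' : step M c = Some c' -> run M 1 c = Some c'.
Proof. intros H; simpl; rewrite H; reflexivity. Qed.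

Lemma scan_right q l L r : (forall a, In a l -> delta M q a = Some (q, a, Rgt)) ->
  run M (length l) (at_ q L (l ++ r)) = Some (at_ q (rev l ++ L) r).
Proof.
  revert L; induction l as [|a l IH]; intros L H; [reflexivity|].
  change (length (a :: l)) with (1 + length l).
  erewrite run_add; [| apply run_1, step_R; simpl; apply H; left; reflexivity].
  simpl tl. rewrite IH by (intros; apply H; right; auto). simpl. rewrite <- app_assoc. reflexivity.
Qed.

Lemma scan_left q l L t : (forall a, In a l -> delta M q a = Some (q, a, Lft)) ->
  run M (length l) (moveL q (l ++ L) t) = Some (moveL q L (rev l ++ t)).
Proof.
  revert t; induction l as [|a l IH]; intros t H; [reflexivity|].
  change (length (a :: l)) with (1 + length l).
  change (moveL q ((a :: l) ++ L) t) with (at_ q (l ++ L) (a :: t)).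
  erewrite run_add; [| apply run_1, step_L; simpl; apply H; left; reflexivity].
  simpl tl. rewrite IH by (intros; apply H; right; auto). simpl. rewrite <- app_assoc. reflexivity.
Qed.
End Gen.

Lemma run_trans M a b c c1 c2 : run M a c = Some c1 -> run M b c1 = Some c2 -> run M (a + b) c = Some c2.
Proof. intros H1 H2. rewrite (run_add M a b c c1 H1). exact H2. Qed.

Lemma dlt_eq q a : q < 174 -> a < 16 -> dlt q a = delta0 q a.
Proof. intros H1 H2. unfold dlt. rewrite (proj2 (Nat.ltb_lt _ _) H1), (proj2 (Nat.ltb_lt _ _) H2). reflexivity. Qed.

Lemma d0_sym a : sym a -> dlt 0 a = Some (0, a, Rgt).
Proof. unfold sym; intros H. do 14 (destruct a as [|a]; [try reflexivity; lia|]); lia. Qed.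
Lemma dB_ok m a : 1 <= a <= 14 -> dlt (Bst m) a = Some (Bst m, a, Lft).
Proof. intros H. destruct m; do 15 (destruct a as [|a]; [try reflexivity; lia|]); lia. Qed.
Lemma dS_sym m a : sym a -> dlt (Sst m) a = Some (Rst m a 0, 15, Rgt).
Proof. unfold sym; intros H. destruct m; do 14 (destruct a as [|a]; [try reflexivity; lia|]); lia. Qed.
Lemma dR_nz m x k a : x < 14 -> k < 6 -> 1 <= a <= 15 -> dlt (Rst m x k) a = Some (Rst m x k, a, Rgt).
Proof.
  intros Hx Hk Ha. rewrite dlt_eq by (unfold Rst, code; destruct m; lia).
  change (delta0 (Rst m x k) a) with (Rbranch (code m x k) a). unfold Rbranch.
  rewrite decode_code by auto. replace (a =? 0) with false by (symmetry; apply Nat.eqb_neq; lia). reflexivity.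
Qed.
Lemma dR_0 m x k : x < 14 -> k < 6 -> dlt (Rst m x k) 0 =
    if k + 1 <? length (out m x) then Some (Rst m x (k+1), nth k (out m x) 0, Rgt)
    else Some (Bst (newmode m x), nth k (out m x) 0, Lft).
Proof.
  intros Hx Hk. rewrite dlt_eq by (unfold Rst, code; destruct m; lia).
  change (delta0 (Rst m x k) 0) with (Rbranch (code m x k) 0). unfold Rbranch.
  rewrite decode_code by auto. reflexivity.
Qed.

Lemma out_len m x : 1 <= length (out m x) <= 6.
Proof. destruct m; do 14 (destruct x as [|x]; [simpl; lia|]); simpl; lia. Qed.
Lemma out_sym m x : sym x -> Forall sym (out m x).
Proof. unfold sym; intros H. destruct m; do 14 (destruct x as [|x]; [simpl; repeat constructor; lia|]); lia. Qed.

Lemma skipn_help (k : nat) : forall (p : list nat) a r, skipn k p = a :: r ->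
  skipn (S k) p = r /\ nth k p 0 = a /\ length p = k + S (length r).
Proof.
  induction k; intros p a r H; destruct p as [|b p]; simpl in *; try discriminate.
  - inversion H; subst; auto.
  - destruct (IHk p a r H) as [H1 [H2 H3]]. auto.
Qed.

Lemma write m x : sym x -> forall s k L y, skipn k (out m x) = s ++ [y] ->
  run TMf (S (length s)) (at_ (Rst m x k) L []) = Some (moveL (Bst (newmode m x)) (rev s ++ L) [y]).
Proof.
  intros Hx. pose proof (out_len m x) as Hl0. unfold sym in Hx.
  induction s as [|a s IH]; intros k L y Hs.
  - destruct (skipn_help k _ _ _ Hs) as [_ [Hn Hl]]. simpl in Hl.
    apply run_1, step_L. simpl hd0. rewrite dR_0 by lia.
    replace (k + 1 <? length (out m x)) with false by (symmetry; apply Nat.ltb_ge; lia).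
    rewrite Hn. reflexivity.
  - destruct (skipn_help k _ _ _ Hs) as [Hs' [Hn Hl]].
    rewrite length_app in Hl; simpl in Hl.
    change (S (length (a :: s))) with (1 + S (length s)).
    eapply run_trans.
    + apply run_1, step_R. simpl hd0. rewrite dR_0 by lia.
      replace (k + 1 <? length (out m x)) with true by (symmetry; apply Nat.ltb_lt; lia).
      rewrite Hn. reflexivity.
    + simpl tl. replace (k + 1) with (S k) by lia. rewrite IH with (y := y) by exact Hs'.
      simpl. rewrite <- app_assoc. reflexivity.
Qed.

Definition loopcfg m j u o := at_ (Sst m) (repeat 15 j ++ [0]) (u ++ 14 :: o).
Definition tsym (a : nat) := 1 <= a <= 14.

Lemma round m j x u o : sym x -> Forall sym u -> Forall sym o ->
  run TMf (3 + 2 * length u + 2 * length o + 2 * length (out m x)) (loopcfg m j (x :: u) o)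
  = Some (loopcfg (newmode m x) (S j) u (o ++ out m x)).
Proof.
  intros Hx Hu Ho.
  assert (Hne : out m x <> []) by (pose proof (out_len m x) as H; destruct (out m x); simpl in H; [lia | discriminate]).
  destruct (exists_last Hne) as [s' [y Hp]].
  pose proof (out_sym m x Hx) as Hos. rewrite Hp in Hos.
  unfold loopcfg. set (J := repeat 15 j ++ [0]). set (l := u ++ 14 :: o).
  assert (Hlt : forall a, In a l -> tsym a).
  { intros a Ha. unfold l in Ha. apply in_app_or in Ha as [Ha|[<-|Ha]].
    - rewrite Forall_forall in Hu; specialize (Hu a Ha); unfold sym, tsym in *; lia.
    - unfold tsym; lia.
    - rewrite Forall_forall in Ho; specialize (Ho a Ha); unfold sym, tsym in *; lia. }
  assert (Hst : forall a, In a s' -> tsym a).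
  { intros a Ha. rewrite Forall_forall in Hos. specialize (Hos a (in_or_app _ _ _ (or_introl Ha))). unfold sym, tsym in *; lia. }
  assert (E1 : run TMf 1 (at_ (Sst m) J ((x :: u) ++ 14 :: o)) = Some (at_ (Rst m x 0) (15 :: J) l)).
  { apply run_1, step_R. simpl. apply dS_sym; auto. }
  assert (E2 : run TMf (length l) (at_ (Rst m x 0) (15 :: J) l) = Some (at_ (Rst m x 0) (rev l ++ 15 :: J) [])).
  { pose proof (scan_right TMf (Rst m x 0) l (15 :: J) []) as H. rewrite app_nil_r in H. apply H.
    intros a Ha. apply Hlt in Ha. unfold tsym in Ha. apply dR_nz; unfold sym in Hx; lia. }
  assert (E3 : run TMf (S (length s')) (at_ (Rst m x 0) (rev l ++ 15 :: J) []) =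
     Some (moveL (Bst (newmode m x)) ((rev s' ++ rev l) ++ 15 :: J) [y])).
  { rewrite <- app_assoc. apply write; auto. }
  assert (E4 : run TMf (length (rev s' ++ rev l)) (moveL (Bst (newmode m x)) ((rev s' ++ rev l) ++ 15 :: J) [y])
     = Some (moveL (Bst (newmode m x)) (15 :: J) (rev (rev s' ++ rev l) ++ [y]))).
  { apply scan_left. intros a Ha. apply dB_ok. apply in_app_or in Ha as [Ha|Ha]; apply in_rev in Ha; [apply Hst|apply Hlt]; auto. }
  assert (E5 : run TMf 1 (moveL (Bst (newmode m x)) (15 :: J) (rev (rev s' ++ rev l) ++ [y]))
     = Some (at_ (Sst (newmode m x)) (15 :: J) (u ++ 14 :: o ++ out m x))).
  { apply run_1. change (moveL (Bst (newmode m x)) (15 :: J) (rev (rev s' ++ rev l) ++ [y]))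
      with (at_ (Bst (newmode m x)) J (15 :: rev (rev s' ++ rev l) ++ [y])).
    rewrite step_R with (q' := Sst (newmode m x)) (b := 15).
    - simpl tl. rewrite rev_app_distr, !rev_involutive, Hp. unfold l. repeat rewrite <- app_assoc. reflexivity.
    - simpl. destruct (newmode m x); reflexivity. }
  replace (3 + 2 * length u + 2 * length o + 2 * length (out m x)) with
    (1 + (length l + (S (length s') + (length (rev s' ++ rev l) + 1)))).
  - eapply run_trans; [exact E1|]. eapply run_trans; [exact E2|]. eapply run_trans; [exact E3|].
    eapply run_trans; [exact E4|]. exact E5.
  - rewrite Hp. unfold l. rewrite !length_app, !length_rev, !length_app. simpl. lia.
Qed.

Lemma step_halt L t : step TMf (at_ 5 L t) = None.
Proof. destruct t as [|x r]; unfold step; simpl; [reflexivity|]. unfold dlt; simpl. destruct (x <? 16); reflexivity. Qed.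

Lemma loop u : forall m j o, Forall sym u -> Forall sym o -> exists n L,
  n <= length u * (2 * length o + 14 * length u + 16) + 1 /\
  run TMf n (loopcfg m j u o) = Some (at_ 5 L (o ++ trans m u)).
Proof.
  induction u as [|x u IH]; intros m j o Hu Ho.
  - exists 1, (14 :: repeat 15 j ++ [0]). split; [simpl; lia|].
    apply run_1. unfold loopcfg. simpl app. rewrite app_nil_r. apply step_R. simpl. destruct m; reflexivity.
  - inversion Hu as [|? ? Hx Hu']; subst.
    destruct (IH (newmode m x) (S j) (o ++ out m x) Hu') as [n [L [Hn Hr]]].
    { apply Forall_app; split; auto using out_sym. }
    exists ((3 + 2 * length u + 2 * length o + 2 * length (out m x)) + n), L. split.
    + pose proof (out_len m x). rewrite length_app in Hn. simpl length. nia.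
    + eapply run_trans; [apply round; auto|]. rewrite Hr. simpl. rewrite app_assoc. reflexivity.
Qed.

Lemma init_ok w : Forall sym w -> run TMf (length w + 1 + (length w + 1)) (init w) = Some (loopcfg false 0 w []).
Proof.
  intros Hw.
  assert (Hi : init w = at_ 0 [] w) by (destruct w; reflexivity). rewrite Hi.
  replace (length w + 1 + (length w + 1)) with (length w + (1 + (length w + 1))) by lia.
  eapply run_trans.
  { pose proof (scan_right TMf 0 w [] []) as H. rewrite app_nil_r in H. apply H.
    intros a Ha. rewrite Forall_forall in Hw. apply d0_sym; auto. }
  rewrite app_nil_r. eapply run_trans.
  { apply run_1, step_L. reflexivity. }
  simpl tl. eapply run_trans.
  { pose proof (scan_left TMf 1 (rev w) [] [14]) as H. rewrite app_nil_r, length_rev in H. apply H.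
    intros a Ha. apply in_rev in Ha. rewrite Forall_forall in Hw. apply Hw in Ha. apply (dB_ok false). unfold sym in Ha; lia. }
  rewrite rev_involutive. apply run_1.
  change (moveL 1 [] (w ++ [14])) with (at_ 1 [] (0 :: w ++ [14])).
  apply step_R. reflexivity.
Qed.

Lemma take_nb l : Forall sym l -> take_nonblank l = l.
Proof. induction 1 as [|x l Hx _ IH]; auto. unfold sym in Hx. destruct x; [lia|]. simpl. rewrite IH; auto. Qed.

Lemma trans_sym m u : Forall sym u -> Forall sym (trans m u).
Proof. intros H; revert m; induction H; intros m; simpl; auto. apply Forall_app; split; auto using out_sym. Qed.

Theorem theorem1 :
  exists f : form -> form,
    polytime_form_fun f /\
    (forall phi : form, var_free (f phi)) /\
    (forall phi : form, IPDL phi <-> IPDL (f phi)).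
Proof.
  exists tr. split; [|split].
  - exists TMf, 2, 32. split; [exact TMf_wf|]. intros phi.
    pose proof (proj1 enc_sym phi) as Hs.
    set (w := enc_form phi) in *.
    destruct (loop w false 0 [] Hs (Forall_nil _)) as [n [L [Hn Hr]]].
    exists (length w + 1 + (length w + 1) + n), (at_ 5 L (trans false w)).
    split; [|split; [|split]].
    + simpl length in Hn. rewrite Nat.pow_2_r. nia.
    + eapply run_trans; [apply init_ok; auto|]. exact Hr.
    + apply step_halt.
    + pose proof (proj1 enc_trans phi []) as E. rewrite !app_nil_r in E. fold w in E.
      rewrite <- E. pose proof (trans_sym false w Hs) as Ht.
      destruct (trans false w) as [|a r] eqn:Eq; [reflexivity|].
      change (take_nonblank (a :: r) = a :: r). apply take_nb; auto.
  - apply (proj1 tr_vf).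
  - intros phi. apply tr_valid.
Qed.
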